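(* Let $A\in\mathbb{R}^{n\times n}$, $B\in\mathbb{R}^{n\times k}$ and $F\in\mathbb{R}^{k\times n}$ be arbitrary. For $C\in\mathbb{R}^{m\times n}$ let $\Omega(C,F)=[C;\,C(A+BF);\,\dots;\,C(A+BF)^{n-1}]$ and let $\mathcal{V}^*(C)$ be the maximal $(A,B)$-invariant subspace contained in $\operatorname{Ker}C$. Let $BR1_a=\arg\min_{C\in\mathbb{R}^{m\times n}}\dim\operatorname{Ker}\Omega(C,F)$ and $BR2X_a=\arg\min_{C\in\mathbb{R}^{m\times n}}\dim\mathcal{V}^*(C)$. Then for every $C_1\in BR2X_a$ and every $C_2\in BR1_a$, $\dim\mathcal{V}^*(C_1)\ge\dim\operatorname{Ker}\Omega(C_2,F)$.
   Context: A subspace $\mathcal{V}\subseteq\mathbb{R}^n$ is $(A,B)$-invariant if there exists a matrix $F'$ with $(A+BF')\mathcal{V}\subseteq\mathcal{V}$. Among all $(A,B)$-invariant subspaces contained in $\operatorname{Ker}C$ there is a maximal one, $\mathcal{V}^*(C)$. *)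

(* Defs.v *)
(* Conventions: vectors of R^n are row vectors 'rV_n
   (a column vector x corresponds to x^T); a subspace of R^n is the row space
   of a matrix V : 'M_n.  M x  corresponds to  x^T *m M^T. *)
From HB Require Import structures.
From mathcomp Require Import all_boot all_order all_algebra.
From mathcomp Require Import reals.
Set Implicit Arguments. Unset Strict Implicit. Unset Printing Implicit Defensive.
Import Order.TTheory GRing.Theory Num.Theory.
Local Open Scope ring_scope.

Section Defs.
Variables (R : realType) (n k m : nat).

Definition KerM (p : nat) (C : 'M[R]_(p, n)) : 'M[R]_n := kermx C^T.

Definition ABinvariant (A : 'M[R]_n) (B : 'M[R]_(n, k)) (V : 'M[R]_n) : Prop :=
  exists F' : 'M[R]_(k, n), (V *m (A + B *m F')^T <= V)%MS.

Definition is_Vstar (A : 'M[R]_n) (B : 'M[R]_(n, k)) (C : 'M[R]_(m, n))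
    (V : 'M[R]_n) : Prop :=
  [/\ ABinvariant A B V, (V <= KerM C)%MS &
      forall W : 'M[R]_n, ABinvariant A B W -> (W <= KerM C)%MS -> (W <= V)%MS].

Definition Omega (A : 'M[R]_n) (B : 'M[R]_(n, k)) (F : 'M[R]_(k, n))
    (C : 'M[R]_(m, n)) : 'M[R]_(\sum_(i < n) m, n) :=
  \mxcol_(i < n) (C *m (A + B *m F) ^+ i).

Definition dimKerOmega A B F C : nat := \rank (KerM (Omega A B F C)).

End Defs.

(* Main.v *)
Require Import Defs.
From HB Require Import structures.
From mathcomp Require Import all_boot all_order all_algebra.
From mathcomp Require Import reals.
Import Order.TTheory GRing.Theory Num.Theory.
Local Open Scope ring_scope.

Lemma CH_pow (R : comNzRingType) n (M : 'M[R]_n.+1) :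
  M ^+ n.+1 = - \sum_(i < n.+1) (char_poly M)`_i *: M ^+ i.
Proof.
have H := Cayley_Hamilton M.
have mon := char_poly_monic M; have sz := size_char_poly M.
rewrite -[char_poly M]coefK poly_def sz rmorph_sum big_ord_recr /= in H.
move/monicP: mon; rewrite /lead_coef sz /= => l1.
rewrite l1 scale1r rmorphXn /= horner_mx_X in H.
have E : \sum_(i < n.+1) horner_mx M ((char_poly M)`_i *: 'X^i) =
   \sum_(i < n.+1) (char_poly M)`_i *: M ^+ i.
  by apply: eq_bigr => i _; rewrite horner_mxZ rmorphXn /= horner_mx_X.
by apply/eqP; rewrite -addr_eq0 addrC -E H.
Qed.

Lemma kerOmegaP (R : realType) (n k m p : nat)
    (A : 'M[R]_n) (B : 'M[R]_(n, k)) (F : 'M[R]_(k, n))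
    (C : 'M[R]_(m, n)) (X : 'M[R]_(p, n)) :
  (X <= KerM (Omega A B F C))%MS <->
  (forall i : 'I_n, X *m (C *m (A + B *m F) ^+ i)^T = 0).
Proof.
rewrite /KerM /Omega sub_kermx tr_mxcol mul_mxrow.
split.
  move/eqP => H i.
  by rewrite -[LHS](mxrowK (fun i => X *m (C *m (A + B *m F) ^+ i)^T) i) H submxrow0.
move=> H; apply/eqP.
by rewrite (eq_mxrow (B_ := fun _ => 0)) ?mxrow0.
Qed.

Lemma pow_last (R : comNzRingType) n p m (M : 'M[R]_n.+1) (C : 'M[R]_(m, n.+1))
   (X : 'M[R]_(p, n.+1)) :
  (forall i : 'I_n.+1, X *m (C *m M ^+ i)^T = 0) ->
  X *m (C *m M ^+ n.+1)^T = 0.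
Proof.
move=> H.
rewrite CH_pow mulmxN mulmx_sumr linearN /= linear_sum /= mulmxN mulmx_sumr.
rewrite big1 ?oppr0 // => i _.
by rewrite -scalemxAr linearZ /= -scalemxAr H scaler0.
Qed.

Theorem lemma4 (R : realType) (n k m : nat)
    (A : 'M[R]_n) (B : 'M[R]_(n, k)) (F : 'M[R]_(k, n))
    (C1 C2 : 'M[R]_(m, n)) (V1 : 'M[R]_n) :
  (* V1 = V^*(C1), and C1 ∈ BR2X_a *)
  is_Vstar A B C1 V1 ->
  (forall (C : 'M[R]_(m, n)) (V : 'M[R]_n), is_Vstar A B C V ->
     (\rank V1 <= \rank V)%N) ->
  (* C2 ∈ BR1_a *)
  (forall C : 'M[R]_(m, n), (dimKerOmega A B F C2 <= dimKerOmega A B F C)%N) ->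
  (dimKerOmega A B F C2 <= \rank V1)%N.
Proof.
move=> [_ _ Vmax] _ Hmin.
apply: leq_trans (Hmin C1) _.
destruct n as [|n'].
  by rewrite /dimKerOmega; apply: leq_trans (rank_leq_col _) _.
rewrite /dimKerOmega; apply: mxrankS; apply: Vmax.
  exists F.
  apply/kerOmegaP => i.
  set M := A + B *m F.
  have K0 := proj1 (@kerOmegaP R _ _ _ _ A B F C1 (KerM (Omega A B F C1))) (submx_refl _).
  rewrite -mulmxA -trmx_mul.
  have -> : (C1 *m M ^+ i) *m M = C1 *m M ^+ i.+1.
    by rewrite -mulmxA; congr (_ *m _); rewrite exprSr.
  case: (ltnP i.+1 n'.+1) => hi.
    exact: (K0 (Ordinal hi)).
  have -> : i.+1 = n'.+1 by apply/eqP; rewrite eqn_leq hi ltn_ord.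
  exact: pow_last.
apply/sub_kermxP.
have K0 := proj1 (@kerOmegaP R _ _ _ _ A B F C1 (KerM (Omega A B F C1))) (submx_refl _) ord0.
by rewrite expr0 mulmx1 in K0.
Qed.
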